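(* Let $c>0$ and let $\Phi:[0,\infty)\to\mathbb{R}$ be the Gneiting function $$\Phi(r)=\left(1-\frac{r}{c}\right)_+^{5}\left(1+5\frac{r}{c}-27\left(\frac{r}{c}\right)^2\right).$$ Let $\mathbf{p}\in\mathbb{R}^2$, $\Delta_x,\Delta_y\in\mathbb{R}$, and define $\mathbf{H}=(H_1,H_2):\mathbb{R}^2\to\mathbb{R}^2$ by $$H_1(x,y)=x+\Delta_x\,\Phi(\|(x,y)-\mathbf{p}\|),\qquad H_2(x,y)=y+\Delta_y\,\Phi(\|(x,y)-\mathbf{p}\|),$$ where $\|\cdot\|$ is the Euclidean norm. Let $\Delta=\max(|\Delta_x|,|\Delta_y|)$. If $c>4.43\sqrt{2}\,\Delta$ (approximately $c>6.26\,\Delta$), then the Jacobian determinant $$\det J(x,y)=1+\Delta_x\frac{\partial}{\partial x}\Phi(\|(x,y)-\mathbf{p}\|)+\Delta_y\frac{\partial}{\partial y}\Phi(\|(x,y)-\mathbf{p}\|)$$ is strictly positive at every point $(x,y)\in\mathbb{R}^2$.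
   Context: $(t)_+=\max(t,0)$ denotes the truncated power function. The map $\mathbf{H}$ is the one-landmark transformation shifting the source landmark $\mathbf{p}$ to the target landmark $\mathbf{p}+(\Delta_x,\Delta_y)$; positivity of the Jacobian determinant everywhere is the criterion used for topology preservation. *)

(* Defs.v *)
From Stdlib Require Import Reals Lra.
From Coquelicot Require Import Coquelicot.
Open Scope R_scope.

Definition tpos (t : R) : R := Rmax t 0.

Definition gneiting (c r : R) : R :=
  (tpos (1 - r / c)) ^ 5 * (1 + 5 * (r / c) - 27 * (r / c) ^ 2).

Definition dist2 (px py x y : R) : R :=
  sqrt ((x - px) ^ 2 + (y - py) ^ 2).

Definition bump (c px py x y : R) : R := gneiting c (dist2 px py x y).

Definition H1 (c px py dx dy x y : R) : R := x + dx * bump c px py x y.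
Definition H2 (c px py dx dy x y : R) : R := y + dy * bump c px py x y.

Definition jacdet (c px py dx dy x y : R) : R :=
  1 + dx * Derive (fun t => bump c px py t y) x
    + dy * Derive (fun t => bump c px py x t) y.

(* Main.v *)
Require Import Defs.
From Stdlib Require Import Reals Lra Psatz.
From Coquelicot Require Import Coquelicot.
Open Scope R_scope.

Lemma glue (f g h : R -> R) x0 l :
  (forall t, t <= x0 -> f t = g t) -> (forall t, x0 <= t -> f t = h t) ->
  is_derive g x0 l -> is_derive h x0 l -> is_derive f x0 l.
Proof.
intros Hfg Hfh Hg Hh.
apply is_derive_Reals in Hg. apply is_derive_Reals in Hh. apply is_derive_Reals.
intros eps He.
destruct (Hg eps He) as [d1 H1]. destruct (Hh eps He) as [d2 H2].
assert (Hd : 0 < Rmin d1 d2) by (apply Rmin_pos; [apply d1|apply d2]).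
exists (mkposreal _ Hd). simpl. intros k Hk0 Hk.
assert (Hk1 : Rabs k < d1) by (eapply Rlt_le_trans; [exact Hk| apply Rmin_l]).
assert (Hk2 : Rabs k < d2) by (eapply Rlt_le_trans; [exact Hk| apply Rmin_r]).
destruct (Rle_dec k 0).
- rewrite (Hfg (x0+k)) by lra. rewrite (Hfg x0) by lra. apply H1; auto.
- rewrite (Hfh (x0+k)) by lra. rewrite (Hfh x0) by lra. apply H2; auto.
Qed.

Lemma div_le1 c r : 0 < c -> r <= c -> 0 <= 1 - r / c.
Proof. intros Hc Hr. assert (r / c <= 1). { apply (Rmult_le_reg_r c). lra. unfold Rdiv. rewrite Rmult_assoc, Rinv_l by lra. lra. } lra. Qed.
Lemma div_ge1 c r : 0 < c -> c <= r -> 1 - r / c <= 0.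
Proof. intros Hc Hr. assert (1 <= r / c). { apply (Rmult_le_reg_r c). lra. unfold Rdiv. rewrite Rmult_assoc, Rinv_l by lra. lra. } lra. Qed.

Definition Phi0 (c r : R) : R := (1 - r/c)^5 * (1 + 5*(r/c) - 27*(r/c)^2).
Definition Phid (c r : R) : R := 21/c^2 * r * tpos (1 - r/c)^4 * (9*(r/c) - 4).

Lemma Phi0_deriv c r0 : 0 < c -> r0 <= c ->
  is_derive (Phi0 c) r0 (Phid c r0).
Proof.
intros Hc Hr. unfold Phi0, Phid, tpos.
rewrite Rmax_left.
2:{ apply div_le1; lra. }
auto_derive. auto. field. lra.
Qed.

Lemma gn_zero c t : 0 < c -> c <= t -> gneiting c t = 0.
Proof. intros Hc Ht. unfold gneiting, tpos. rewrite Rmax_right. ring. apply div_ge1; lra. Qed.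
Lemma gn_phi0 c t : 0 < c -> t <= c -> gneiting c t = Phi0 c t.
Proof. intros Hc Ht. unfold gneiting, tpos, Phi0. rewrite Rmax_left. reflexivity. apply div_le1; lra. Qed.
Lemma Phid_zero c t : 0 < c -> c <= t -> Phid c t = 0.
Proof. intros Hc Ht. unfold Phid, tpos. rewrite Rmax_right. ring. apply div_ge1; lra. Qed.

Lemma gn_deriv c r0 : 0 < c -> is_derive (gneiting c) r0 (Phid c r0).
Proof.
intros Hc.
destruct (Rtotal_order r0 c) as [Hlt|[Heq|Hgt]].
- apply is_derive_ext_loc with (Phi0 c).
  + assert (He : 0 < c - r0) by lra.
    exists (mkposreal _ He). intros t Ht.
    change (Rabs (t - r0) < c - r0) in Ht. apply Rabs_lt_between' in Ht.
    symmetry. apply gn_phi0; lra.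
  + apply Phi0_deriv; lra.
- subst r0. apply glue with (Phi0 c) (fun _ => 0).
  + intros t Ht. apply gn_phi0; lra.
  + intros t Ht. apply gn_zero; lra.
  + apply Phi0_deriv; lra.
  + rewrite Phid_zero by lra. (auto_derive; try auto; try ring).
- apply is_derive_ext_loc with (fun _ => 0).
  + assert (He : 0 < r0 - c) by lra.
    exists (mkposreal _ He). intros t Ht.
    change (Rabs (t - r0) < r0 - c) in Ht. apply Rabs_lt_between' in Ht.
    symmetry. apply gn_zero; lra.
  + rewrite Phid_zero by lra. (auto_derive; try auto; try ring).
Qed.
Definition K (c a b : R) : R :=
  21/c^2 * a * tpos (1 - sqrt (a^2 + b^2)/c)^4 * (9*(sqrt (a^2+b^2)/c) - 4).

Lemma partial c px b t0 : 0 < c ->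
  is_derive (fun t => gneiting c (sqrt ((t - px)^2 + b^2))) t0 (K c (t0 - px) b).
Proof.
intros Hc.
destruct (Req_dec ((t0 - px)^2 + b^2) 0) as [H0|H0].
- assert (Ht : t0 = px) by nra. assert (Hb : b = 0) by nra. subst t0 b.
  replace (K c (px - px) 0) with 0 by (unfold K; ring).
  apply glue with (fun t => gneiting c (px - t)) (fun t => gneiting c (t - px)).
  + intros t Ht. replace ((t - px)^2 + 0^2) with ((px - t)^2) by ring.
    rewrite sqrt_pow2 by lra. reflexivity.
  + intros t Ht. replace ((t - px)^2 + 0^2) with ((t - px)^2) by ring.
    rewrite sqrt_pow2 by lra. reflexivity.
  + assert (Hd := gn_deriv c (px - px) Hc).
    assert (Hl : is_derive (fun t => px - t) px (-1)) by (auto_derive; auto; ring).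
    pose proof (is_derive_comp (gneiting c) (fun t => px - t) px _ _ Hd Hl) as HH.
    replace 0 with (scal (-1) (Phid c (px - px))). exact HH.
    unfold scal; simpl; unfold mult; simpl. unfold Phid. ring.
  + assert (Hd := gn_deriv c (px - px) Hc).
    assert (Hl : is_derive (fun t => t - px) px 1) by (auto_derive; auto; ring).
    pose proof (is_derive_comp (gneiting c) (fun t => t - px) px _ _ Hd Hl) as HH.
    replace 0 with (scal 1 (Phid c (px - px))). exact HH.
    unfold scal; simpl; unfold mult; simpl. unfold Phid. ring.
- assert (Hp : 0 < (t0 - px)^2 + b^2) by (pose proof (pow2_ge_0 (t0-px)); pose proof (pow2_ge_0 b); lra).
  assert (Hd := gn_deriv c (sqrt ((t0 - px)^2 + b^2)) Hc).
  assert (Hl : is_derive (fun t => sqrt ((t - px)^2 + b^2)) t0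
            ((t0 - px) / sqrt ((t0 - px)^2 + b^2))).
  { auto_derive. lra. change R in t0. replace ((t0 + - px) * ((t0 + - px) * 1) + b * (b * 1)) with ((t0 - px)^2 + b^2) by ring. field. apply Rgt_not_eq. apply sqrt_lt_R0. exact Hp. }
  assert (Hs : 0 < sqrt ((t0 - px)^2 + b^2)) by (apply sqrt_lt_R0; exact Hp).
  assert (E : (t0 - px) / sqrt ((t0 - px)^2 + b^2) * Phid c (sqrt ((t0 - px)^2 + b^2)) = K c (t0 - px) b).
  { unfold Phid, K. field. split; lra. }
  pose proof (is_derive_comp (gneiting c) (fun t => sqrt ((t - px)^2 + b^2)) t0 _ _ Hd Hl) as HH.
  rewrite <- E. exact HH.
Qed.
Lemma poly1 s : 0 <= s -> s <= 4/9 -> 21*s*(1-s)^4*(4-9*s) <= 443/100.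
Proof.
intros H1 H2.
set (s0 := 1289/10000).
set (q := 533019687610640349/2000000000000000 - 230321300892459/250000000000 * s
   + 126286882407/100000000 * s^2 - 3956379/5000 * s^3 + 189 * s^4).
assert (E : 443/100 - 21*s*(1-s)^4*(4-9*s) = (s - s0)^2 * q +
   (376595621481236689171/200000000000000000000000 + 679243010855789583/50000000000000000000 * s)).
{ unfold q, s0. field. }
assert (Hq : 0 <= q).
{ unfold q. nra. }
assert (0 <= (s-s0)^2 * q) by (apply Rmult_le_pos; [apply pow2_ge_0|exact Hq]).
lra.
Qed.
Lemma poly2 s : 4/9 <= s -> s <= 1 -> 21*s*(1-s)^4*(9*s-4) <= 443/100.
Proof.
intros H1 H2.
assert (A: 0 <= (1-s)^3 <= (5/9)^3). { split. apply pow_le; lra. apply pow_incr; lra. }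
assert (B: 0 <= (1-s)*(9*s-4) <= 7/10).
{ split. apply Rmult_le_pos; lra. assert (0 <= (s-13/18)^2) by apply pow2_ge_0. nra. }
replace (21*s*(1-s)^4*(9*s-4)) with (21*s*((1-s)^3*((1-s)*(9*s-4)))) by ring.
assert (0 <= (1-s)^3*((1-s)*(9*s-4)) <= (5/9)^3 * (7/10)) by (split; [apply Rmult_le_pos; lra| apply Rmult_le_compat; lra]).
nra.
Qed.
Lemma polyb s : 0 <= s -> s <= 1 -> 21*s*(1-s)^4*Rabs (9*s-4) <= 443/100.
Proof.
intros H1 H2. destruct (Rle_dec (9*s-4) 0).
- rewrite Rabs_left1 by lra. replace (- (9*s-4)) with (4 - 9*s) by ring. apply poly1; lra.
- rewrite Rabs_right by lra. apply poly2; lra.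
Qed.

Lemma final c dx dy a b : 0 < c ->
  443/100 * sqrt 2 * Rmax (Rabs dx) (Rabs dy) < c ->
  0 < 1 + dx * K c a b + dy * K c b a.
Proof.
intros Hc Hd. unfold K. rewrite (Rplus_comm (b^2) (a^2)).
set (r := sqrt (a^2 + b^2)).
set (D := Rmax (Rabs dx) (Rabs dy)) in *.
assert (Hr0 : 0 <= r) by apply sqrt_pos.
assert (Hr2 : r^2 = a^2 + b^2) by (apply pow2_sqrt; pose proof (pow2_ge_0 a); pose proof (pow2_ge_0 b); lra).
destruct (Rle_dec c r) as [Hcr|Hcr].
- assert (HT : tpos (1 - r/c) = 0) by (unfold tpos; apply Rmax_right; apply div_ge1; lra).
  rewrite HT. ring_simplify. lra.
- assert (HT : tpos (1 - r/c) = 1 - r/c) by (unfold tpos; apply Rmax_left; apply div_le1; lra).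
  rewrite HT.
  set (s := r / c).
  assert (Hs0 : 0 <= s) by (unfold s; apply Rmult_le_pos; [lra| left; apply Rinv_0_lt_compat; lra]).
  assert (Hs1 : s <= 1) by (pose proof (div_le1 c r Hc); unfold s in *; lra).
  set (A := 21/c^2*(1-s)^4*(9*s-4)).
  set (E := dx*a + dy*b).
  replace (1 + dx * (21 / c ^ 2 * a * (1 - s) ^ 4 * (9 * s - 4)) +
    dy * (21 / c ^ 2 * b * (1 - s) ^ 4 * (9 * s - 4))) with (1 + A * E) by (unfold A, E; ring).
  assert (HD0 : 0 <= D) by (unfold D; eapply Rle_trans; [apply Rabs_pos| apply Rmax_l]).
  assert (HE1 : Rabs E <= D * (Rabs a + Rabs b)).
  { unfold E. eapply Rle_trans. apply Rabs_triang. rewrite !Rabs_mult.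
    assert (Rabs dx * Rabs a <= D * Rabs a) by (apply Rmult_le_compat_r; [apply Rabs_pos|apply Rmax_l]).
    assert (Rabs dy * Rabs b <= D * Rabs b) by (apply Rmult_le_compat_r; [apply Rabs_pos|apply Rmax_r]).
    lra. }
  assert (Hab : Rabs a + Rabs b <= sqrt 2 * r).
  { assert (H2 : sqrt 2 ^ 2 = 2) by (apply pow2_sqrt; lra).
    assert (0 <= sqrt 2) by apply sqrt_pos.
    pose proof (pow2_abs a). pose proof (pow2_abs b).
    pose proof (Rabs_pos a). pose proof (Rabs_pos b).
    assert (0 <= (Rabs a - Rabs b)^2) by apply pow2_ge_0.
    assert (0 <= sqrt 2 * r) by (apply Rmult_le_pos; lra).
    apply Rsqr_incr_0_var. unfold Rsqr. nra. lra. }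
  assert (HE : Rabs E <= D * sqrt 2 * r).
  { eapply Rle_trans. exact HE1. rewrite Rmult_assoc. apply Rmult_le_compat_l; lra. }
  set (k := D * sqrt 2 / c).
  assert (Hk0 : 0 <= k) by (unfold k; apply Rmult_le_pos; [apply Rmult_le_pos; [lra|apply sqrt_pos]| left; apply Rinv_0_lt_compat; lra]).
  assert (Hk : 443/100 * k < 1).
  { unfold k. apply (Rmult_lt_reg_r c). lra.
    replace (443 / 100 * (D * sqrt 2 / c) * c) with (443/100 * sqrt 2 * D) by (field; lra). lra. }
  assert (HrE : D * sqrt 2 * r = k * s * c^2) by (unfold k, s; field; lra).
  assert (HA : Rabs A = 21/c^2*(1-s)^4*Rabs (9*s-4)).
  { unfold A. rewrite !Rabs_mult. rewrite (Rabs_right (21 / c^2)).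
    rewrite (Rabs_right ((1-s)^4)). reflexivity.
    apply Rle_ge, pow_le; lra.
    apply Rle_ge. unfold Rdiv. apply Rmult_le_pos. lra. left. apply Rinv_0_lt_compat. apply pow_lt. lra. }
  assert (HAE : Rabs (A * E) <= 21 * s * (1-s)^4 * Rabs (9*s-4) * k).
  { rewrite Rabs_mult. eapply Rle_trans.
    apply Rmult_le_compat_l. apply Rabs_pos. exact HE.
    rewrite HrE, HA. right. field. lra. }
  assert (HP := polyb s Hs0 Hs1).
  assert (21 * s * (1-s)^4 * Rabs (9*s-4) * k <= 443/100 * k) by (apply Rmult_le_compat_r; lra).
  pose proof (Rle_abs (- (A * E))). rewrite Rabs_Ropp in *. lra.
Qed.

Theorem mainTheorem2 (c px py dx dy : R) :
  0 < c ->
  443 / 100 * sqrt 2 * Rmax (Rabs dx) (Rabs dy) < c ->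
  forall x y : R,
    ex_derive (fun t => bump c px py t y) x /\
    ex_derive (fun t => bump c px py x t) y /\
    0 < jacdet c px py dx dy x y.
Proof.
intros Hc Hd x y.
assert (H1 : is_derive (fun t => bump c px py t y) x (K c (x - px) (y - py))).
{ apply (partial c px (y - py) x Hc). }
assert (H2 : is_derive (fun t => bump c px py x t) y (K c (y - py) (x - px))).
{ apply is_derive_ext with (fun t => gneiting c (sqrt ((t - py)^2 + (x - px)^2))).
  - intros t. unfold bump, dist2. rewrite Rplus_comm. reflexivity.
  - apply (partial c py (x - px) y Hc). }
split; [eexists; exact H1|].
split; [eexists; exact H2|].
assert (E1 : Derive (fun t : R => bump c px py t y) x = K c (x - px) (y - py)) by (apply is_derive_unique; exact H1).
assert (E2 : Derive (fun t : R => bump c px py x t) y = K c (y - py) (x - px)) by (apply is_derive_unique; exact H2).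
unfold jacdet. rewrite E1, E2.
apply final; assumption.
Qed.
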